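(* Let $f:M\to\mathbb{R}^{0,2,1}$ be a non-degenerate $d$-minimal surface. Then $\iota\circ f:M\to\mathbb{R}^4_1$ is a spacelike, flat, zero mean curvature surface in $\mathbb{R}^4_1$.
   Context: $\mathbb{R}^{0,2,1}$ denotes $\mathbb{R}^3$ with coordinates $(x,y,z)$ and the degenerate form $(\cdot,\cdot)=dx^2+dy^2$. A non-degenerate immersion has positive definite induced metric $g=f^*(\cdot,\cdot)$. With $\xi=(0,0,1)$ and $d$ the standard flat connection of $\mathbb{R}^3$, writing $d_X(df(Y))=df(\nabla_XY)+h(X,Y)\xi$ ($\nabla$ the Levi-Civita connection of $g$) defines the second fundamental form $h$, and $f$ is $d$-minimal if $\mathrm{tr}_gh\equiv0$. $\mathbb{R}^4_1$ is $\mathbb{R}^4$ with metric $-dx_1^2+dx_2^2+dx_3^2+dx_4^2$, and $\iota(x,y,z)=(z,x,y,z)$. A surface in $\mathbb{R}^4_1$ is spacelike if its induced metric is positive definite, flat if its Gaussian curvature vanishes, and zero mean curvature if its mean curvature vector field vanishes. *)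

(* Defs.v *)
From Stdlib Require Import Reals Lra ClassicalEpsilon.
Open Scope R_scope.

(** * Local coordinates.  A surface is given by a parametrization defined on an
    open subset U of R^2 (coordinates (u,v)). *)

Inductive ix := i1 | i2.

Definition sum2 (F : ix -> R) : R := F i1 + F i2.

Definition has_pd (i : ix) (h : R -> R -> R) (u v l : R) : Prop :=
  match i with
  | i1 => derivable_pt_lim (fun t => h t v) u l
  | i2 => derivable_pt_lim (fun t => h u t) v l
  end.

(** the partial derivative operator (meaningful where the derivative exists) *)
Definition pd (i : ix) (h : R -> R -> R) (u v : R) : R :=
  epsilon (inhabits 0) (fun l => has_pd i h u v l).

Definition open2 (U : R -> R -> Prop) : Prop :=
  forall u v, U u v -> exists r, 0 < r /\
    forall u' v', (u' - u)^2 + (v' - v)^2 < r^2 -> U u' v'.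

Definition cont2_on (U : R -> R -> Prop) (h : R -> R -> R) : Prop :=
  forall u v, U u v -> forall eps, 0 < eps -> exists del, 0 < del /\
    forall u' v', Rabs (u' - u) < del -> Rabs (v' - v) < del ->
      Rabs (h u' v' - h u v) < eps.

Fixpoint Ck (n : nat) (U : R -> R -> Prop) (h : R -> R -> R) : Prop :=
  match n with
  | O => cont2_on U h
  | S m => cont2_on U h /\
           (forall i u v, U u v -> exists l, has_pd i h u v l) /\
           (forall i, Ck m U (pd i h))
  end.

Definition smooth_on (U : R -> R -> Prop) (h : R -> R -> R) : Prop :=
  forall n, Ck n U h.

(** * Riemannian metrics in coordinates: g i j u v *)
Definition metric := ix -> ix -> R -> R -> R.

Definition posdef_on (U : R -> R -> Prop) (g : metric) : Prop :=
  forall u v, U u v -> forall a b, (a <> 0 \/ b <> 0) ->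
    0 < a*a*g i1 i1 u v + a*b*g i1 i2 u v + b*a*g i2 i1 u v + b*b*g i2 i2 u v.

Definition mdet (g : metric) (u v : R) : R :=
  g i1 i1 u v * g i2 i2 u v - g i1 i2 u v * g i2 i1 u v.

Definition ginv (g : metric) (i j : ix) (u v : R) : R :=
  match i, j with
  | i1, i1 => g i2 i2 u v / mdet g u v
  | i2, i2 => g i1 i1 u v / mdet g u v
  | i1, i2 => - g i1 i2 u v / mdet g u v
  | i2, i1 => - g i2 i1 u v / mdet g u v
  end.

Definition Gamma (g : metric) (k i j : ix) (u v : R) : R :=
  /2 * sum2 (fun l => ginv g k l u v *
     (pd i (g j l) u v + pd j (g i l) u v - pd l (g i j) u v)).

(** components of R(d1,d2)d2, with R(X,Y)Z = nabla_X nabla_Y Z - nabla_Y nabla_X Z *)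
Definition Riem122 (g : metric) (l : ix) (u v : R) : R :=
  pd i1 (Gamma g l i2 i2) u v - pd i2 (Gamma g l i1 i2) u v
  + sum2 (fun m => Gamma g m i2 i2 u v * Gamma g l i1 m u v
                   - Gamma g m i1 i2 u v * Gamma g l i2 m u v).

Definition gauss_curv (g : metric) (u v : R) : R :=
  sum2 (fun l => g l i1 u v * Riem122 g l u v) / mdet g u v.

(** * R^{0,2,1}: maps (x,y,z) with degenerate form dx^2+dy^2 *)
Definition g_deg (x y : R -> R -> R) : metric :=
  fun i j u v => pd i x u v * pd j x u v + pd i y u v * pd j y u v.

Definition nondeg_immersion (U : R -> R -> Prop) (x y z : R -> R -> R) : Prop :=
  smooth_on U x /\ smooth_on U y /\ smooth_on U z /\ posdef_on U (g_deg x y).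

(** d_{d_i}(df(d_j)) = df(nabla_{d_i} d_j) + h(d_i,d_j) xi, xi = (0,0,1),
    and tr_g h = 0 *)
Definition d_minimal (U : R -> R -> Prop) (x y z : R -> R -> R) : Prop :=
  exists h : ix -> ix -> R -> R -> R,
    (forall u v, U u v -> forall i j,
       pd i (pd j x) u v = sum2 (fun k => Gamma (g_deg x y) k i j u v * pd k x u v)
                            + h i j u v * 0 /\
       pd i (pd j y) u v = sum2 (fun k => Gamma (g_deg x y) k i j u v * pd k y u v)
                            + h i j u v * 0 /\
       pd i (pd j z) u v = sum2 (fun k => Gamma (g_deg x y) k i j u v * pd k z u v)
                            + h i j u v * 1) /\
    (forall u v, U u v ->
       sum2 (fun i => sum2 (fun j => ginv (g_deg x y) i j u v * h i j u v)) = 0).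

(** * Minkowski space R^4_1, coordinates indexed 0..3 *)
Definition ip41 (a b : nat -> R) : R :=
  - a 0%nat * b 0%nat + a 1%nat * b 1%nat + a 2%nat * b 2%nat + a 3%nat * b 3%nat.

Definition iota (x y z : R -> R -> R) : nat -> R -> R -> R :=
  fun k => match k with
           | 0%nat => z | 1%nat => x | 2%nat => y | 3%nat => z
           | _ => fun _ _ => 0 end.

Definition g_ind4 (F : nat -> R -> R -> R) : metric :=
  fun i j u v => ip41 (fun k => pd i (F k) u v) (fun k => pd j (F k) u v).

Definition spacelike (U : R -> R -> Prop) (F : nat -> R -> R -> R) : Prop :=
  posdef_on U (g_ind4 F).

Definition flat (U : R -> R -> Prop) (F : nat -> R -> R -> R) : Prop :=
  forall u v, U u v -> gauss_curv (g_ind4 F) u v = 0.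

(** second fundamental form: normal component of d_i d_j F,
    i.e. minus its orthogonal projection onto span(d_1 F, d_2 F) *)
Definition sff4 (F : nat -> R -> R -> R) (i j : ix) (u v : R) (k : nat) : R :=
  pd i (pd j (F k)) u v
  - sum2 (fun a => sum2 (fun b =>
      ginv (g_ind4 F) a b u v
      * ip41 (fun m => pd i (pd j (F m)) u v) (fun m => pd b (F m) u v)
      * pd a (F k) u v)).

Definition mean_curv4 (F : nat -> R -> R -> R) (u v : R) (k : nat) : R :=
  /2 * sum2 (fun i => sum2 (fun j => ginv (g_ind4 F) i j u v * sff4 F i j u v k)).

Definition zero_mean_curvature (U : R -> R -> Prop) (F : nat -> R -> R -> R) : Prop :=
  forall u v, U u v -> forall k, (k < 4)%nat -> mean_curv4 F u v k = 0.

(* Main.v *)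
Require Import Defs.
From Stdlib Require Import Reals Lra Lia FunctionalExtensionality ClassicalEpsilon.
From Coquelicot Require Import Coquelicot.
Open Scope R_scope.
Require Import Defs.

Lemma loc_of (a : R) (P : R -> Prop) :
  (exists eps, 0 < eps /\ forall z, Rabs (z - a) < eps -> P z) -> locally a P.
Proof.
  intros [eps [He H]]. exists (mkposreal eps He). intros z Hz. apply H. exact Hz.
Qed.

Lemma sq_lt (t r : R) : Rabs t < r -> t^2 < r^2.
Proof.
  intros H. rewrite <- (pow2_abs t). pose proof (Rabs_pos t). nra.
Qed.

Lemma open_line (U : R -> R -> Prop) a b : open2 U -> U a b ->
  (exists eps, 0 < eps /\ forall z, Rabs (z - a) < eps -> U z b) /\
  (exists eps, 0 < eps /\ forall z, Rabs (z - b) < eps -> U a z).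
Proof.
  intros HU Hab. destruct (HU a b Hab) as [r [Hr H]]. split; exists r; split; auto;
  intros z Hz; apply H; apply sq_lt in Hz.
  - replace (b - b) with 0 by ring. lra.
  - replace (a - a) with 0 by ring. lra.
Qed.

Lemma open_box (U : R -> R -> Prop) u v : open2 U -> U u v ->
  exists d, 0 < d /\ forall a b, Rabs (a - u) < d -> Rabs (b - v) < d -> U a b.
Proof.
  intros HU Huv. destruct (HU u v Huv) as [r [Hr H]]. exists (r/2). split; [lra|].
  intros a b Ha Hb. apply H. apply sq_lt in Ha. apply sq_lt in Hb. nra.
Qed.

Lemma pd_eq i h u v l : has_pd i h u v l -> pd i h u v = l.
Proof.
  intros H. unfold pd.
  pose proof (epsilon_spec (inhabits 0) (fun l => has_pd i h u v l) (ex_intro _ l H)) as He.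
  destruct i; simpl in *; eapply uniqueness_limite; eauto.
Qed.

Definition dif i h u v := exists l, has_pd i h u v l.

Lemma dif_pd i h u v : dif i h u v -> has_pd i h u v (pd i h u v).
Proof. intros [l H]. rewrite (pd_eq _ _ _ _ _ H). exact H. Qed.

Lemma has_pd_mult i f g u v lf lg : has_pd i f u v lf -> has_pd i g u v lg ->
  has_pd i (fun a b => f a b * g a b) u v (lf * g u v + f u v * lg).
Proof.
  destruct i; simpl; intros H1 H2; apply (derivable_pt_lim_mult _ _ _ _ _ H1 H2).
Qed.

Lemma has_pd_plus i f g u v lf lg : has_pd i f u v lf -> has_pd i g u v lg ->
  has_pd i (fun a b => f a b + g a b) u v (lf + lg).
Proof.
  destruct i; simpl; intros H1 H2; apply (derivable_pt_lim_plus _ _ _ _ _ H1 H2).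
Qed.

Lemma has_pd_minus i f g u v lf lg : has_pd i f u v lf -> has_pd i g u v lg ->
  has_pd i (fun a b => f a b - g a b) u v (lf - lg).
Proof.
  destruct i; simpl; intros H1 H2; apply (derivable_pt_lim_minus _ _ _ _ _ H1 H2).
Qed.

Lemma has_pd_div i f g u v lf lg : has_pd i f u v lf -> has_pd i g u v lg -> g u v <> 0 ->
  has_pd i (fun a b => f a b / g a b) u v ((lf * g u v - lg * f u v) / (g u v)²).
Proof.
  destruct i; simpl; intros H1 H2 H3; apply (derivable_pt_lim_div _ _ _ _ _ H1 H2 H3).
Qed.

Lemma dif_mult i f g u v : dif i f u v -> dif i g u v -> dif i (fun a b => f a b * g a b) u v.
Proof. intros [l1 H1] [l2 H2]. eexists. apply has_pd_mult; eauto. Qed.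
Lemma dif_minus i f g u v : dif i f u v -> dif i g u v -> dif i (fun a b => f a b - g a b) u v.
Proof. intros [l1 H1] [l2 H2]. eexists. apply has_pd_minus; eauto. Qed.
Lemma dif_div i f g u v : dif i f u v -> dif i g u v -> g u v <> 0 ->
  dif i (fun a b => f a b / g a b) u v.
Proof. intros [l1 H1] [l2 H2] H3. eexists. apply has_pd_div; eauto. Qed.

Lemma has_pd_ext U i f g u v l : open2 U -> U u v ->
  (forall a b, U a b -> f a b = g a b) -> has_pd i f u v l -> has_pd i g u v l.
Proof.
  intros HU Huv Hfg. destruct (open_line U u v HU Huv) as [L1 L2].
  destruct i; simpl; intros H; apply is_derive_Reals; apply is_derive_Reals in H.
  - apply (is_derive_ext_loc (fun t => f t v)); [| exact H]. apply loc_of.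
    destruct L1 as [e [He L]]. exists e; split; auto.
  - apply (is_derive_ext_loc (fun t => f u t)); [| exact H]. apply loc_of.
    destruct L2 as [e [He L]]. exists e; split; auto.
Qed.

Lemma Derive_pd1 i f a b : dif i f a b ->
  match i with i1 => Derive (fun t => f t b) a | i2 => Derive (fun t => f a t) b end
  = pd i f a b.
Proof.
  intros H. apply dif_pd in H. destruct i; simpl in H; apply is_derive_unique;
  apply is_derive_Reals; exact H.
Qed.

Lemma ex_of i f a b : dif i f a b ->
  match i with i1 => ex_derive (fun t => f t b) a | i2 => ex_derive (fun t => f a t) b end.
Proof.
  intros [l H]. destruct i; simpl in H; exists l; apply is_derive_Reals; exact H.
Qed.

Lemma cont_ext U F G u v : open2 U -> U u v -> (forall a b, U a b -> F a b = G a b) ->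
  cont2_on U G -> continuity_2d_pt F u v.
Proof.
  intros HU Huv HFG HG eps. destruct (HG u v Huv eps (cond_pos eps)) as [d1 [Hd1 H1]].
  destruct (open_box U u v HU Huv) as [d2 [Hd2 H2]].
  exists (mkposreal (Rmin d1 d2) (Rmin_pos _ _ Hd1 Hd2)). simpl. intros a b Ha Hb.
  pose proof (Rmin_l d1 d2). pose proof (Rmin_r d1 d2).
  rewrite !HFG; auto; [apply H1; lra| apply H2; lra].
Qed.

Lemma schwarz_pd U f u v : open2 U -> U u v -> Ck 2 U f ->
  pd i1 (pd i2 f) u v = pd i2 (pd i1 f) u v.
Proof.
  intros HU Huv [_ [Hf Hf2]].
  destruct (Hf2 i1) as [_ [Hf1d Hf1c]]. destruct (Hf2 i2) as [_ [Hf2d Hf2c]].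
  simpl in Hf1c, Hf2c.
  assert (B1 : forall a b, U a b -> Derive (fun t => f a t) b = pd i2 f a b).
  { intros a b Hab. apply (Derive_pd1 i2). apply Hf; auto. }
  assert (B2 : forall a b, U a b -> Derive (fun t => f t b) a = pd i1 f a b).
  { intros a b Hab. apply (Derive_pd1 i1). apply Hf; auto. }
  assert (H3 : forall a b, U a b -> has_pd i1 (fun a b => Derive (fun t => f a t) b) a b
                 (pd i1 (pd i2 f) a b)).
  { intros a b Hab. apply (has_pd_ext U i1 (pd i2 f)); auto.
    intros; symmetry; auto. apply dif_pd; apply Hf2d; auto. }
  assert (H4 : forall a b, U a b -> has_pd i2 (fun a b => Derive (fun t => f t b) a) a b
                 (pd i2 (pd i1 f) a b)).
  { intros a b Hab. apply (has_pd_ext U i2 (pd i1 f)); auto.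
    intros; symmetry; auto. apply dif_pd; apply Hf1d; auto. }
  assert (B3 : forall a b, U a b -> Derive (fun z => Derive (fun t => f z t) b) a = pd i1 (pd i2 f) a b).
  { intros a b Hab. apply is_derive_unique. apply is_derive_Reals. exact (H3 a b Hab). }
  assert (B4 : forall a b, U a b -> Derive (fun z => Derive (fun t => f t z) a) b = pd i2 (pd i1 f) a b).
  { intros a b Hab. apply is_derive_unique. apply is_derive_Reals. exact (H4 a b Hab). }
  rewrite <- B3, <- B4 by auto. apply Schwarz.
  - destruct (open_box U u v HU Huv) as [d [Hd HB]]. exists (mkposreal d Hd). simpl.
    intros a b Ha Hb. pose proof (HB a b Ha Hb) as Hab. split; [|split; [|split]].
    + apply (ex_of i1). apply Hf; auto.
    + apply (ex_of i2). apply Hf; auto.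
    + exists (pd i1 (pd i2 f) a b). apply is_derive_Reals. exact (H3 a b Hab).
    + exists (pd i2 (pd i1 f) a b). apply is_derive_Reals. exact (H4 a b Hab).
  - apply (cont_ext U (fun u v => Derive (fun z => Derive (fun t => f z t) v) u) (pd i1 (pd i2 f)) u v HU Huv B3 (Hf2c i1)).
  - apply (cont_ext U (fun u v => Derive (fun z => Derive (fun t => f t z) u) v) (pd i2 (pd i1 f)) u v HU Huv B4 (Hf1c i2)).
Qed.

Lemma curv_comp U c (G : ix -> ix -> ix -> R -> R -> R) u v :
 open2 U -> U u v ->
 (forall a b, U a b -> forall i j, pd i (pd j c) a b = sum2 (fun k => G k i j a b * pd k c a b)) ->
 (forall k i j d, dif d (G k i j) u v) ->
 (forall k d, dif d (pd k c) u v) ->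
 pd i1 (pd i2 (pd i2 c)) u v = pd i2 (pd i1 (pd i2 c)) u v ->
 sum2 (fun l => (pd i1 (G l i2 i2) u v - pd i2 (G l i1 i2) u v
     + sum2 (fun m => G m i2 i2 u v * G l i1 m u v - G m i1 i2 u v * G l i2 m u v))
     * pd l c u v) = 0.
Proof.
  intros HU Huv Heq HG Hc Hs.
  assert (T : forall d i j, has_pd d (pd i (pd j c)) u v
     (pd d (G i1 i j) u v * pd i1 c u v + G i1 i j u v * pd d (pd i1 c) u v +
     (pd d (G i2 i j) u v * pd i2 c u v + G i2 i j u v * pd d (pd i2 c) u v))).
  { intros d i j.
    apply (has_pd_ext U d (fun a b => G i1 i j a b * pd i1 c a b + G i2 i j a b * pd i2 c a b)); auto.
    - intros a b Hab. rewrite Heq by auto. reflexivity.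
    - apply has_pd_plus; apply has_pd_mult; apply dif_pd; auto. }
  rewrite (pd_eq _ _ _ _ _ (T i1 i2 i2)) in Hs.
  rewrite (pd_eq _ _ _ _ _ (T i2 i1 i2)) in Hs.
  rewrite !Heq in Hs by auto.
  unfold sum2 in *. lra.
Qed.

Lemma g4_eq (x y z : R -> R -> R) : g_ind4 (iota x y z) = g_deg x y.
Proof.
  extensionality i0; extensionality j0; extensionality u0; extensionality v0.
  unfold g_ind4, g_deg, ip41; simpl; ring.
Qed.

Lemma jac_nz (U : R -> R -> Prop) (x y : R -> R -> R) u v : posdef_on U (g_deg x y) -> U u v ->
  pd i1 x u v * pd i2 y u v - pd i2 x u v * pd i1 y u v <> 0.
Proof.
  intros Hp Huv HD. unfold posdef_on, g_deg in Hp.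
  destruct (Req_dec (pd i2 x u v) 0) as [E1|E1];
  destruct (Req_dec (pd i1 x u v) 0) as [E2|E2].
  - destruct (Req_dec (pd i2 y u v) 0) as [E3|E3].
    + specialize (Hp u v Huv 0 1 (or_intror R1_neq_R0)). rewrite E1, E3 in Hp. lra.
    + specialize (Hp u v Huv (pd i2 y u v) (- pd i1 y u v) (or_introl E3)).
      rewrite E1, E2 in Hp. nra.
  - specialize (Hp u v Huv (pd i2 x u v) (- pd i1 x u v) (or_intror (Ropp_neq_0_compat _ E2))).
    nra.
  - specialize (Hp u v Huv (pd i2 x u v) (- pd i1 x u v) (or_introl E1)). nra.
  - specialize (Hp u v Huv (pd i2 x u v) (- pd i1 x u v) (or_introl E1)). nra.
Qed.

Lemma smooth_facts (U : R -> R -> Prop) (x : R -> R -> R) : smooth_on U x ->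
  (forall k d a b, U a b -> dif d (pd k x) a b) /\
  (forall i j d a b, U a b -> dif d (pd i (pd j x)) a b) /\
  (forall j, Ck 2 U (pd j x)).
Proof.
  intros S. destruct (S 3%nat) as [_ [_ H3]]. split; [|split].
  - intros k d a b Hab. destruct (H3 k) as [_ [H _]]. apply H; auto.
  - intros i j d a b Hab. destruct (H3 j) as [_ [_ H]]. destruct (H i) as [_ [H' _]].
    apply H'; auto.
  - exact H3.
Qed.

Definition Jd (x y : R -> R -> R) a b := pd i1 x a b * pd i2 y a b - pd i2 x a b * pd i1 y a b.

Definition EG (x y : R -> R -> R) (k i j : ix) : R -> R -> R :=
  match k with
  | i1 => fun a b => (pd i (pd j x) a b * pd i2 y a b - pd i (pd j y) a b * pd i2 x a b) / Jd x y a b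
  | i2 => fun a b => (pd i1 x a b * pd i (pd j y) a b - pd i1 y a b * pd i (pd j x) a b) / Jd x y a b
  end.

Lemma gamma_dif (U : R -> R -> Prop) (x y : R -> R -> R) (G : ix -> ix -> ix -> R -> R -> R) u v :
  open2 U -> U u v -> smooth_on U x -> smooth_on U y -> posdef_on U (g_deg x y) ->
  (forall a b, U a b -> forall i j,
     pd i (pd j x) a b = sum2 (fun k => G k i j a b * pd k x a b) /\
     pd i (pd j y) a b = sum2 (fun k => G k i j a b * pd k y a b)) ->
  forall k i j d, dif d (G k i j) u v.
Proof.
  intros HU Huv Sx Sy Hp Heq k i j d.
  destruct (smooth_facts U x Sx) as [X1 [X2 _]].
  destruct (smooth_facts U y Sy) as [Y1 [Y2 _]].
  assert (HE : forall a b, U a b -> EG x y k i j a b = G k i j a b).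
  { intros a b Hab. pose proof (jac_nz U x y a b Hp Hab) as HJ.
    destruct (Heq a b Hab i j) as [E1 E2]. unfold sum2 in *.
    destruct k; simpl; unfold Jd in *; rewrite E1, E2; field; auto. }
  assert (HD : dif d (EG x y k i j) u v).
  { pose proof (jac_nz U x y u v Hp Huv) as HJ.
    assert (DJ : dif d (Jd x y) u v).
    { unfold Jd. apply dif_minus; apply dif_mult; auto. }
    destruct k; simpl; apply dif_div; auto; apply dif_minus; apply dif_mult; auto. }
  destruct HD as [l Hl]. exists l. exact (has_pd_ext U d _ _ u v l HU Huv HE Hl).
Qed.

Theorem mainTheorem16 (U : R -> R -> Prop) (x y z : R -> R -> R) :
  open2 U ->
  nondeg_immersion U x y z ->
  d_minimal U x y z ->
  spacelike U (iota x y z) /\ flat U (iota x y z) /\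
  zero_mean_curvature U (iota x y z).
Proof.
  intros HU [Sx [Sy [Sz Hp]]] [h [Heq Htr]].
  assert (Heq2 : forall a b, U a b -> forall i j,
     pd i (pd j x) a b = sum2 (fun k => Gamma (g_deg x y) k i j a b * pd k x a b) /\
     pd i (pd j y) a b = sum2 (fun k => Gamma (g_deg x y) k i j a b * pd k y a b)).
  { intros a b Hab i j. destruct (Heq a b Hab i j) as [E1 [E2 _]].
    rewrite Rmult_0_r, Rplus_0_r in E1, E2. auto. }
  split; [|split].
  - unfold spacelike. rewrite g4_eq. exact Hp.
  - intros u v Huv. rewrite g4_eq.
    pose proof (gamma_dif U x y _ u v HU Huv Sx Sy Hp Heq2) as GD.
    destruct (smooth_facts U x Sx) as [X1 [_ X3]].
    destruct (smooth_facts U y Sy) as [Y1 [_ Y3]].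
    assert (Hx : Riem122 (g_deg x y) i1 u v * pd i1 x u v + Riem122 (g_deg x y) i2 u v * pd i2 x u v = 0).
    { apply (curv_comp U x (Gamma (g_deg x y)) u v HU Huv); auto.
      - intros a b Hab i j. apply Heq2; auto.
      - apply (schwarz_pd U); auto. }
    assert (Hy : Riem122 (g_deg x y) i1 u v * pd i1 y u v + Riem122 (g_deg x y) i2 u v * pd i2 y u v = 0).
    { apply (curv_comp U y (Gamma (g_deg x y)) u v HU Huv); auto.
      - intros a b Hab i j. apply Heq2; auto.
      - apply (schwarz_pd U); auto. }
    unfold gauss_curv, sum2.
    change (g_deg x y i1 i1 u v) with (pd i1 x u v * pd i1 x u v + pd i1 y u v * pd i1 y u v).
    change (g_deg x y i2 i1 u v) with (pd i2 x u v * pd i1 x u v + pd i2 y u v * pd i1 y u v).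
    set (R1 := Riem122 (g_deg x y) i1 u v) in *. set (R2 := Riem122 (g_deg x y) i2 u v) in *.
    replace ((pd i1 x u v * pd i1 x u v + pd i1 y u v * pd i1 y u v) * R1 +
      (pd i2 x u v * pd i1 x u v + pd i2 y u v * pd i1 y u v) * R2)
      with (pd i1 x u v * (R1 * pd i1 x u v + R2 * pd i2 x u v)
          + pd i1 y u v * (R1 * pd i1 y u v + R2 * pd i2 y u v)) by ring.
    rewrite Hx, Hy. unfold Rdiv. ring.
  - intros u v Huv k Hk.
    pose proof (jac_nz U x y u v Hp Huv) as HJ.
    assert (Hm : (pd i1 x u v * pd i1 x u v + pd i1 y u v * pd i1 y u v) *
                 (pd i2 x u v * pd i2 x u v + pd i2 y u v * pd i2 y u v) -
                 (pd i1 x u v * pd i2 x u v + pd i1 y u v * pd i2 y u v) *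
                 (pd i2 x u v * pd i1 x u v + pd i2 y u v * pd i1 y u v) <> 0).
    { replace (_ - _) with ((pd i1 x u v * pd i2 y u v - pd i2 x u v * pd i1 y u v) *
         (pd i1 x u v * pd i2 y u v - pd i2 x u v * pd i1 y u v)) by ring.
      apply Rmult_integral_contrapositive; auto. }
    pose proof (Htr u v Huv) as T.
    destruct (Heq u v Huv i1 i1) as [A1 [A2 A3]].
    destruct (Heq u v Huv i1 i2) as [B1 [B2 B3]].
    destruct (Heq u v Huv i2 i1) as [C1 [C2 C3]].
    destruct (Heq u v Huv i2 i2) as [D1 [D2 D3]].
    unfold mean_curv4, sff4. rewrite g4_eq.
    destruct k as [|[|[|[|k]]]]; [| | | |lia].
    all: unfold sum2, ip41 in *.
    all: cbn [iota].
    all: rewrite A1, A2, A3, B1, B2, B3, C1, C2, C3, D1, D2, D3.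
    all: generalize (Gamma (g_deg x y)) as GG.
    all: intros GG.
    all: unfold ginv, mdet, g_deg in *.
    all: set (x1 := pd i1 x u v) in *.
    all: set (x2 := pd i2 x u v) in *.
    all: set (y1 := pd i1 y u v) in *.
    all: set (y2 := pd i2 y u v) in *.
    all: set (z1 := pd i1 z u v) in *.
    all: set (z2 := pd i2 z u v) in *.
    all: match goal with |- ?A = 0 => match type of T with ?TR = 0 =>
      assert (E : A = /2 * TR \/ A = 0 * TR) end end.
    all: try (left; field; auto; fail); try (right; field; auto; fail).
    all: destruct E as [E|E]; rewrite E, T; ring.
Qed.
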